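(* Let $\tau$ be a signature containing at least two function symbols (constant symbols counted as $0$-ary function symbols), at least one of which has arity $\ge 2$. Then there is a $\Pi^0_2$-sentence $\varphi$ of $\mathcal L_{\omega,\omega}(\tau)$ such that $\vartheta^*(\varphi)$ is not expressible by any sentence of $\mathcal L_{\omega,\omega}(\tau)$.
   Context: Models are nonempty; $\mathfrak B$ is an extension of $\mathfrak A$ if $\mathfrak A$ is a substructure of $\mathfrak B$. $\mathfrak A\vDash\vartheta^*(\varphi)$ iff there is an extension $\mathfrak B$ of $\mathfrak A$ with $\mathfrak B\vDash\varphi$. $\mathcal L_{\omega,\omega}(\tau)$ is ordinary first-order logic with equality. A $\Pi^0_2$-sentence is a prenex sentence $\forall\bar x\,\exists\bar y\,\psi_0$ with $\psi_0$ quantifier-free. A property is expressible by a sentence $\chi$ if for every $\tau$-model $\mathfrak A$, $\mathfrak A$ has the property iff $\mathfrak A\vDash\chi$. *)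

(* Defs.v *)
From mathcomp Require Import all_boot.
Set Implicit Arguments.
Unset Strict Implicit.
Unset Printing Implicit Defensive.

Record signature := Signature {
  funs : Type;
  rels : Type;
  farity : funs -> nat;
  rarity : rels -> nat
}.

Section FOL.
Variable tau : signature.

Inductive term : Type :=
| tvar : nat -> term
| tapp : forall f : funs tau, ('I_(farity f) -> term) -> term.

Inductive formula : Type :=
| fbot : formula
| feq  : term -> term -> formula
| frel : forall r : rels tau, ('I_(rarity r) -> term) -> formula
| fnot : formula -> formula
| fand : formula -> formula -> formula
| for_ : formula -> formula -> formula
| fimp : formula -> formula -> formula
| fall : nat -> formula -> formula
| fex  : nat -> formula -> formula.

Fixpoint term_occ (x : nat) (t : term) : Prop :=
  match t with
  | tvar y => x = y
  | tapp f ts => exists i, term_occ x (ts i)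
  end.

Fixpoint free_in (x : nat) (phi : formula) : Prop :=
  match phi with
  | fbot => False
  | feq t1 t2 => term_occ x t1 \/ term_occ x t2
  | frel r ts => exists i, term_occ x (ts i)
  | fnot p => free_in x p
  | fand p q | for_ p q | fimp p q => free_in x p \/ free_in x q
  | fall y p | fex y p => x <> y /\ free_in x p
  end.

Definition sentence (phi : formula) : Prop := forall x, ~ free_in x phi.

Fixpoint quantifier_free (phi : formula) : Prop :=
  match phi with
  | fbot | feq _ _ | frel _ _ => True
  | fnot p => quantifier_free p
  | fand p q | for_ p q | fimp p q => quantifier_free p /\ quantifier_free q
  | fall _ _ | fex _ _ => False
  end.

Definition foralls (xs : seq nat) (phi : formula) : formula :=
  foldr fall phi xs.
Definition existss (ys : seq nat) (phi : formula) : formula :=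
  foldr fex phi ys.

Definition Pi02_sentence (phi : formula) : Prop :=
  sentence phi /\
  exists (xs ys : seq nat) (psi0 : formula),
    quantifier_free psi0 /\ phi = foralls xs (existss ys psi0).

(* tau-structures (models are nonempty). *)
Record structure := Structure {
  dom :> Type;
  dom_wit : dom;
  finterp : forall f : funs tau, ('I_(farity f) -> dom) -> dom;
  rinterp : forall r : rels tau, ('I_(rarity r) -> dom) -> Prop
}.

Fixpoint eval (A : structure) (v : nat -> A) (t : term) : A :=
  match t with
  | tvar x => v x
  | tapp f ts => @finterp A f (fun i => eval v (ts i))
  end.

Definition upd (A : structure) (v : nat -> A) (x : nat) (a : A) : nat -> A :=
  fun y => if y == x then a else v y.

Fixpoint holds (A : structure) (v : nat -> A) (phi : formula) : Prop :=
  match phi with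
  | fbot => False
  | feq t1 t2 => eval v t1 = eval v t2
  | frel r ts => @rinterp A r (fun i => eval v (ts i))
  | fnot p => ~ holds v p
  | fand p q => holds v p /\ holds v q
  | for_ p q => holds v p \/ holds v q
  | fimp p q => holds v p -> holds v q
  | fall x p => forall a : A, holds (upd v x a) p
  | fex x p => exists a : A, holds (upd v x a) p
  end.

(* Satisfaction of a sentence (the assignment is irrelevant for sentences). *)
Definition models (A : structure) (phi : formula) : Prop :=
  holds (fun _ => dom_wit A) phi.

(* B is an extension of A: A is (an isomorphic copy of) a substructure of B,
   i.e. there is an injective embedding A -> B preserving functions and
   (in both directions) relations. *)
Definition extension (A B : structure) : Prop :=
  exists h : A -> B,
    injective h /\
    (forall f (as_ : 'I_(farity f) -> A),
        h (@finterp A f as_) = @finterp B f (fun i => h (as_ i))) /\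
    (forall r (as_ : 'I_(rarity r) -> A),
        @rinterp A r as_ <-> @rinterp B r (fun i => h (as_ i))).

Definition theta_star (phi : formula) (A : structure) : Prop :=
  exists B : structure, extension A B /\ models B phi.

Definition expressible_by (P : structure -> Prop) (chi : formula) : Prop :=
  sentence chi /\ forall A : structure, P A <-> models A chi.

End FOL.

(* Main.v *)
From Stdlib Require Import ZArith Lia ClassicalEpsilon FunctionalExtensionality Classical ProofIrrelevance Setoid.
Require Import Defs.
From mathcomp Require Import all_boot zify.
Set Implicit Arguments. Unset Strict Implicit. Unset Printing Implicit Defensive.

Definition nth_arg (X : Type) n (args : 'I_n -> X) (k : nat) (d : X) : X :=
  match insub k with Some i => args i | None => d end.

Lemma nth_arg_ord X n (args : 'I_n -> X) (i : 'I_n) d : nth_arg args i d = args i.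
Proof. by rewrite /nth_arg valK. Qed.

Lemma nth_arg_comp X Y n (args : 'I_n -> X) (g : X -> Y) k d :
  nth_arg (fun i => g (args i)) k (g d) = g (nth_arg args k d).
Proof. rewrite /nth_arg; by case: insub. Qed.

Section Gen.
Variable tau : signature.
Variable F : funs tau.

Definition isF (f : funs tau) : bool :=
  if excluded_middle_informative (f = F) then true else false.
Lemma isFF : isF F = true.
Proof. rewrite /isF; by case: excluded_middle_informative. Qed.

Fixpoint base (t : term tau) : option nat :=
  match t with
  | tvar x => Some x
  | tapp f ts => match insub 0%N : option 'I_(farity f) with Some i => base (ts i) | None => None end
  end.

Fixpoint off (t : term tau) : Z :=
  match t with
  | tvar _ => 0%Z
  | tapp f ts => ((match insub 0%N : option 'I_(farity f) with Some i => off (ts i) | None => 0%Z end)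
                  + (if isF f then 1 else 0))%Z
  end.

Lemma off_ge0 t : (0 <= off t)%Z.
Proof.
elim: t => [x|f ts IH] /=; first lia.
case: insub => [i|]; [have := IH i|]; case: isF; lia.
Qed.

Definition shS (D : Type) (e : D) (sh : D -> Z -> D) : structure tau :=
  @Structure tau D e (fun f args => if isF f then sh (nth_arg args 0 e) 1%Z else nth_arg args 0 e)
    (fun _ _ => False).

Definition pe (D : Type) (e : D) (v : nat -> D) (o : option nat) : D :=
  match o with Some x => v x | None => e end.

Lemma eval_sh (D : Type) (e : D) (sh : D -> Z -> D)
  (sh0 : forall a, sh a 0%Z = a) (shA : forall a x y, sh (sh a x) y = sh a (x + y)%Z)
  (v : nat -> D) t :
  @eval tau (shS e sh) v t = sh (pe e v (base t)) (off t).
Proof.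
elim: t => [x|f ts IH] /=; first by rewrite sh0.
rewrite /nth_arg. case: insub => [i|].
  rewrite IH; case: isF; first by rewrite shA.
  by rewrite Z.add_0_r.
by case: isF => /=; rewrite ?sh0.
Qed.
End Gen.

Record goodsh (D : Type) (sh : D -> Z -> D) (B : Z) : Prop := GoodSh {
  sh0 : forall a, sh a 0%Z = a;
  shA : forall a x y, sh (sh a x) y = sh a (x + y)%Z;
  shP : forall a d, (Z.abs d <= B)%Z -> sh a d = a -> d = 0%Z;
  shF : forall (l : list D) (T : Z), exists b, forall q, List.In q l ->
          forall d, (Z.abs d <= T)%Z -> sh q d <> b }.

Section EF.
Local Open Scope Z_scope.

Lemma sh_eq D sh B (G : @goodsh D sh B) x y d d0 : sh x d = sh y d0 <-> sh x (d - d0) = y.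
Proof.
split=> H.
- have H' := f_equal (fun z => sh z (- d0)) H.
  by rewrite /= !(shA G) !Z.add_opp_r Z.sub_diag (sh0 G) in H'.
- rewrite -H (shA G). f_equal; lia.
Qed.

Lemma sh_eq' D sh B (G : @goodsh D sh B) x d y : sh x d = y <-> x = sh y (- d).
Proof.
split=> H.
- by rewrite -H (shA G) Z.add_opp_r Z.sub_diag (sh0 G).
- by rewrite H (shA G) Z.add_opp_diag_l (sh0 G).
Qed.

Lemma sh_per D sh B (G : @goodsh D sh B) a d : Z.abs d <= B -> (sh a d = a <-> d = 0).
Proof. move=> Hd; split; first exact: (shP G). by move=> ->; rewrite (sh0 G). Qed.

Definition inP (S : seq nat) (o : option nat) : Prop :=
  match o with Some y => List.In y S | None => True end.

Definition rel (D1 : Type) (e1 : D1) (sh1 : D1 -> Z -> D1) (D2 : Type) (e2 : D2) (sh2 : D2 -> Z -> D2)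
  (S : seq nat) (T : Z) (v : nat -> D1) (w : nat -> D2) : Prop :=
  forall o1 o2, inP S o1 -> inP S o2 -> forall d, Z.abs d <= T ->
    (sh1 (pe e1 v o1) d = pe e1 v o2 <-> sh2 (pe e2 w o1) d = pe e2 w o2).

Lemma rel_mono D1 e1 sh1 D2 e2 sh2 S T T' v w : T' <= T ->
  @rel D1 e1 sh1 D2 e2 sh2 S T v w -> rel e1 sh1 e2 sh2 S T' v w.
Proof. move=> HT H o1 o2 H1 H2 d Hd; apply: H => //; lia. Qed.

Lemma rel_sym D1 e1 sh1 D2 e2 sh2 S T v w :
  @rel D1 e1 sh1 D2 e2 sh2 S T v w -> rel e2 sh2 e1 sh1 S T w v.
Proof. move=> H o1 o2 H1 H2 d Hd; symmetry; exact: H. Qed.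

Lemma pe_old tau (D : structure tau) (e : D) (v : nat -> D) x a o : o <> Some x -> pe e (upd v x a) o = pe e v o.
Proof. case: o => //= y Hy; rewrite /upd; case: eqP => // E; by subst. Qed.

Lemma pe_new tau (D : structure tau) (e : D) (v : nat -> D) x a : pe e (upd v x a) (Some x) = a.
Proof. by rewrite /= /upd eqxx. Qed.

Lemma ext_step tau (D1 D2 : structure tau) e1 sh1 B1 e2 sh2 B2 (G1 : @goodsh D1 sh1 B1) (G2 : @goodsh D2 sh2 B2)
  S T x v w a :
  0 <= T -> T <= B1 -> T <= B2 -> rel e1 sh1 e2 sh2 S (2 * T) v w ->
  exists b, rel e1 sh1 e2 sh2 S T (upd v x a) (upd w x b).
Proof.
move=> T0 TB1 TB2 R.
case: (classic (exists o d0, inP S o /\ o <> Some x /\ Z.abs d0 <= T /\ a = sh1 (pe e1 v o) d0)).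
- move=> [o [d0 [Ho [Hox [Hd0 Ha]]]]].
  exists (sh2 (pe e2 w o) d0) => o1 o2 H1 H2 d Hd.
  case: (classic (o1 = Some x)) => E1; case: (classic (o2 = Some x)) => E2.
  + rewrite E1 E2 !pe_new. rewrite (sh_per G1) ?(sh_per G2); lia.
  + rewrite E1 !pe_new !pe_old // Ha (shA G1) (shA G2). apply: R => //; lia.
  + rewrite E2 !pe_new !pe_old // Ha (sh_eq G1) (sh_eq G2). apply: R => //; lia.
  + rewrite !pe_old //. apply: R => //; lia.
- move=> NP.
  have far1 : forall o, inP S o -> o <> Some x -> forall d0, Z.abs d0 <= T -> a <> sh1 (pe e1 v o) d0.
    move=> o Ho Hox d0 Hd0 Ha; apply: NP; by exists o, d0.
  have [b Hb] := shF G2 (e2 :: map w S) T.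
  have far2 : forall o, inP S o -> forall d, Z.abs d <= T -> sh2 (pe e2 w o) d <> b.
    move=> [y|] Hy d Hd /=; apply: Hb => //=; [right; exact: List.in_map | by left].
  exists b => o1 o2 H1 H2 d Hd.
  case: (classic (o1 = Some x)) => E1; case: (classic (o2 = Some x)) => E2.
  + rewrite E1 E2 !pe_new. rewrite (sh_per G1) ?(sh_per G2); lia.
  + rewrite E1 !pe_new !pe_old // (sh_eq' G1) (sh_eq' G2).
    split=> H; exfalso; [apply: (far1 o2) H | apply: (far2 o2 H2 (- d)) ]; rewrite ?H //; lia.
  + rewrite E2 !pe_new !pe_old //.
    split=> H; exfalso; [apply: (far1 o1 H1 E1 d) | apply: (far2 o1 H1 d)] => //.
  + rewrite !pe_old //. apply: R => //; lia.
Qed.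
End EF.

Section EF2.
Variable tau : signature.
Variable F : funs tau.
Local Open Scope Z_scope.

Fixpoint bnd (p : formula tau) : Z :=
  match p with
  | fbot => 0 | feq t1 t2 => off F t1 + off F t2 | Defs.frel _ _ => 0 | fnot p => bnd p
  | fand p q | for_ p q | fimp p q => Z.max (bnd p) (bnd q)
  | fall _ p | fex _ p => 2 * bnd p
  end.

Lemma bnd_ge0 p : 0 <= bnd p.
Proof. elim: p => [|t1 t2|r ts|p H|p1 H1 p2 H2|p1 H1 p2 H2|p1 H1 p2 H2|x p H|x p H]; cbn [bnd];
  try have := @off_ge0 _ F t1; try have := @off_ge0 _ F t2; lia. Qed.

Fixpoint okS (S : seq nat) (p : formula tau) : Prop :=
  match p with
  | feq t1 t2 => inP S (base t1) /\ inP S (base t2)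
  | fnot p => okS S p
  | fand p q | for_ p q | fimp p q => okS S p /\ okS S q
  | fall _ p | fex _ p => okS S p
  | _ => True
  end.

Definition ob (t : term tau) : seq nat := match base t with Some x => [:: x] | None => [::] end.

Fixpoint bases (p : formula tau) : seq nat :=
  match p with
  | feq t1 t2 => ob t1 ++ ob t2
  | fnot p => bases p
  | fand p q | for_ p q | fimp p q => bases p ++ bases q
  | fall _ p | fex _ p => bases p
  | _ => [::]
  end.

Lemma okS_bases p S : (forall y, List.In y (bases p) -> List.In y S) -> okS S p.
Proof.
elim: p => //= [t1 t2|p1 H1 p2 H2|p1 H1 p2 H2|p1 H1 p2 H2] H;
  try (split; [apply: H1 | apply: H2] => y Hy; apply: H; apply: List.in_or_app; tauto).
rewrite /ob in H; split; [move: H; case: (base t1) => //= y H; apply: H; left|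
  move: H; case: (base t2) => //= y H; apply: H; apply: List.in_or_app; right; left] => //.
Qed.

Lemma ef D1 e1 sh1 B1 D2 e2 sh2 B2 (G1 : @goodsh D1 sh1 B1) (G2 : @goodsh D2 sh2 B2) S p :
  okS S p -> bnd p <= B1 -> bnd p <= B2 ->
  forall v w, rel e1 sh1 e2 sh2 S (bnd p) v w ->
  (holds (A := shS F e1 sh1) v p <-> holds (A := shS F e2 sh2) w p).
Proof.
elim: p => [|t1 t2|r ts|p IH|p IHp q IHq|p IHp q IHq|p IHp q IHq|x p IH|x p IH] Hok HB1 HB2 v w R; cbn [bnd okS holds] in *.
- done.
- rewrite !(@eval_sh _ F _ _ _ (sh0 G1) (shA G1)) !(@eval_sh _ F _ _ _ (sh0 G2) (shA G2)).
  rewrite (sh_eq G1) (sh_eq G2). case: Hok => Ha Hb. apply: R => //.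
  have := @off_ge0 _ F t1; have := @off_ge0 _ F t2; lia.
- rewrite /shS /=; tauto.
- by rewrite (IH Hok HB1 HB2 v w R).
- case: Hok => Hp Hq.
  rewrite (IHp Hp _ _ v w) ?(IHq Hq _ _ v w) //; try lia;
  apply: rel_mono R; lia.
- case: Hok => Hp Hq.
  rewrite (IHp Hp _ _ v w) ?(IHq Hq _ _ v w) //; try lia;
  apply: rel_mono R; lia.
- case: Hok => Hp Hq.
  rewrite (IHp Hp _ _ v w) ?(IHq Hq _ _ v w) //; try lia;
  apply: rel_mono R; lia.
- have b0 : 0 <= bnd p by apply: bnd_ge0.
  split=> H a.
  + have [b Rb] := @ext_step _ (shS F e2 sh2) (shS F e1 sh1) e2 sh2 B2 e1 sh1 B1 G2 G1 S (bnd p) x w v a b0 ltac:(lia) ltac:(lia) (rel_sym R).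
    have := H b. rewrite (IH Hok _ _ _ _ (rel_sym Rb)) //; lia.
  + have [b Rb] := @ext_step _ (shS F e1 sh1) (shS F e2 sh2) e1 sh1 B1 e2 sh2 B2 G1 G2 S (bnd p) x v w a b0 ltac:(lia) ltac:(lia) R.
    rewrite (IH Hok _ _ _ _ Rb) //; lia.
- have b0 : 0 <= bnd p by apply: bnd_ge0.
  split=> [[a H]|[a H]].
  + have [b Rb] := @ext_step _ (shS F e1 sh1) (shS F e2 sh2) e1 sh1 B1 e2 sh2 B2 G1 G2 S (bnd p) x v w a b0 ltac:(lia) ltac:(lia) R.
    exists b. rewrite -(IH Hok _ _ _ _ Rb) //; lia.
  + have [b Rb] := @ext_step _ (shS F e2 sh2) (shS F e1 sh1) e2 sh2 B2 e1 sh1 B1 G2 G1 S (bnd p) x w v a b0 ltac:(lia) ltac:(lia) (rel_sym R).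
    exists b. rewrite (IH Hok _ _ _ _ (rel_sym Rb)) //; lia.
Qed.
End EF2.

Section P4sec.
Local Open Scope Z_scope.

Fixpoint maxl (l : list Z) : Z := match l with nil => 0 | cons a l => Z.max a (maxl l) end.
Lemma maxl_ge l q : List.In q l -> q <= maxl l.
Proof. elim: l => //= a l IH [->|H]; [lia | have := IH H; lia]. Qed.

Lemma good_Z B : goodsh (fun a d : Z => a + d) B.
Proof.
split.
- move=> a; lia.
- move=> a x y; lia.
- move=> a d _; lia.
- move=> l T; exists (maxl l + T + 1) => q Hq d Hd; have := maxl_ge Hq; lia.
Qed.

Definition cyc (N : positive) := {k : Z | 0 <= k < Z.pos N}.
Definition cmk N (k : Z) : cyc N :=
  exist _ (k mod Z.pos N) (Z.mod_pos_bound k (Z.pos N) (Pos2Z.is_pos N)).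
Lemma cyc_eq N (a b : cyc N) : proj1_sig a = proj1_sig b -> a = b.
Proof. case: a => a Ha; case: b => b Hb /= E; subst; f_equal; apply: proof_irrelevance. Qed.

Definition shC N (a : Z + cyc N) (d : Z) : Z + cyc N :=
  match a with inl x => inl (x + d) | inr k => inr (cmk N (proj1_sig k + d)) end.

Fixpoint maxlL N (l : list (Z + cyc N)) : Z :=
  match l with nil => 0 | cons (inl a) l => Z.max a (maxlL l) | cons (inr _) l => maxlL l end.
Lemma maxlL_ge N l q : List.In (inl q) l -> q <= @maxlL N l.
Proof. elim: l => //= [[a|a]] l IH [E|H]; try (case: E => ->); try (have := IH H); try lia; done. Qed.

Lemma good_C N : goodsh (@shC N) (Z.pos N - 1).
Proof.
split.
- case=> [a|[k Hk]] /=; first by rewrite Z.add_0_r.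
  congr inr; apply: cyc_eq => /=; rewrite Z.add_0_r; apply: Z.mod_small; lia.
- case=> [a|[k Hk]] x y /=; first by rewrite Z.add_assoc.
  congr inr; apply: cyc_eq => /=. rewrite Zplus_mod_idemp_l; f_equal; lia.
- case=> [a|[k Hk]] d Hd /=; first by case; lia.
  case=> E. have E2 := Z_div_mod_eq_full (k + d) (Z.pos N). rewrite E in E2.
  have Hq : Z.pos N * ((k + d) / Z.pos N) = d by lia.
  move: Hq; set q := (k + d) / Z.pos N => Hq.
  have [q0|[q1|q2]] : q = 0 \/ q >= 1 \/ q <= -1 by lia.
  + rewrite q0 in Hq; lia.
  + have : Z.pos N * q >= Z.pos N * 1 by apply: Zmult_ge_compat_l; lia.
    lia.
  + have : Z.pos N * q <= Z.pos N * (-1) by apply: Zmult_le_compat_l; lia.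
    lia.
- move=> l T; exists (inl (maxlL l + T + 1)) => [[q|q]] Hq d Hd //=.
  case=> E; have := maxlL_ge Hq; lia.
Qed.

End P4sec.

Section Phi.
Variable tau : signature.
Variable F : funs tau.
Hypothesis HF : (2 <= farity F)%N.

Definition mkF (t1 t2 : term tau) : term tau :=
  @tapp tau F (fun i : 'I_(farity F) => if nat_of_ord i == 0%N then t1 else t2).

Definition FA (A : structure tau) (X Y : A) : A :=
  @finterp tau A F (fun i : 'I_(farity F) => if nat_of_ord i == 0%N then X else Y).

Lemma eval_mkF (A : structure tau) (v : nat -> A) t1 t2 :
  eval v (mkF t1 t2) = FA (eval v t1) (eval v t2).
Proof. rewrite /= /FA; congr finterp; apply: functional_extensionality => i; by case: eqP. Qed.

Definition mF (t : term tau) : formula tau := feq (mkF (mkF t t) t) (mkF t (mkF t t)).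
Definition mA (A : structure tau) (t : A) : Prop := FA (FA t t) t = FA t (FA t t).

Definition vx := @tvar tau 0. Definition vz := @tvar tau 1.
Definition vw := @tvar tau 2. Definition vu := @tvar tau 3.

Definition psi0 : formula tau :=
  fand (fand (mF vu) (feq (mkF vx vu) (mkF vx vx)))
       (fand (fimp (fand (mF vz) (mF vw))
                   (fand (feq (mkF (mkF vx vz) vw) (mkF vx (mkF vz vw))) (mF (mkF vz vw))))
             (fimp (fand (mF vz) (fnot (mF vx))) (fnot (feq (mkF vx vz) vx)))).

Definition phi : formula tau := foralls [:: 0%N; 1%N; 2%N] (existss [:: 3%N] psi0).

Definition Psem (A : structure tau) (x z w u : A) : Prop :=
  (mA u /\ FA x u = FA x x) /\
  ((mA z /\ mA w -> FA (FA x z) w = FA x (FA z w) /\ mA (FA z w)) /\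
   (mA z /\ ~ mA x -> FA x z <> x)).

Lemma holds_psi0 (A : structure tau) (v : nat -> A) :
  holds v psi0 <-> Psem (v 0%N) (v 1%N) (v 2%N) (v 3%N).
Proof. rewrite /psi0 /mF /Psem /mA; cbn [holds]; rewrite !eval_mkF; cbn [eval]. tauto. Qed.

Lemma models_phi (A : structure tau) :
  models A phi <-> forall x z w : A, exists u, Psem x z w u.
Proof.
rewrite /models /phi /foralls /existss; cbn [foldr holds]. split=> H x z w; have [u Hu] := H x z w; exists u;
  move: Hu; rewrite holds_psi0 /upd /=; done.
Qed.

Definition tvg (t : term tau) := forall y, term_occ y t -> (y <= 3)%N.
Lemma tvg_var k : (k <= 3)%N -> tvg (@tvar tau k).
Proof. by move=> Hk y /= ->. Qed.
Lemma tvg_mkF t1 t2 : tvg t1 -> tvg t2 -> tvg (mkF t1 t2).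
Proof. move=> H1 H2 y /= [i]; case: eqP => _; [apply: H1 | apply: H2]. Qed.

Lemma free_psi0 y : free_in y psi0 -> (y <= 3)%N.
Proof.
rewrite /psi0 /mF; cbn [free_in] => H.
decompose [or and] H; clear H;
match goal with h : term_occ _ ?t |- _ =>
  have T : tvg t; [(repeat apply: tvg_mkF); apply: tvg_var; done| exact: T _ h] end.
Qed.

Lemma Pi02_phi : Pi02_sentence phi.
Proof.
split.
- move=> y; rewrite /phi /foralls /existss; cbn [foldr free_in] => [[H0 [H1 [H2 [H3 H]]]]].
  have := free_psi0 H; lia.
- exists [:: 0%N; 1%N; 2%N], [:: 3%N], psi0; split => //.
Qed.
End Phi.

Section Fin.
Variable tau : signature.
Variable F : funs tau.
Hypothesis HF : (2 <= farity F)%N.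

Lemma H0F : (0 < farity F)%N. Proof. exact: ltnW HF. Qed.

Lemma FA_sh (D : Type) (e : D) sh (X Y : D) : FA F (A := shS F e sh) X Y = sh X 1%Z.
Proof.
rewrite /FA /= isFF (nth_arg_ord _ (Ordinal H0F)) //.
Qed.

Definition FBop (X Y : Z + nat) : Z + nat :=
  match X, Y with
  | inl x, inl _ => inl (x + 1)%Z
  | inl x, inr n => inl (x + Z.of_nat n + 1)%Z
  | inr n, inr m => inr (n + m + 1)%N
  | inr n, inl _ => inr n
  end.

Definition Bs : structure tau :=
  @Structure tau (Z + nat)%type (inl 0%Z)
    (fun f args => if isF F f then FBop (nth_arg args 0 (inl 0%Z)) (nth_arg args 1 (inl 0%Z))
                   else nth_arg args 0 (inl 0%Z))
    (fun _ _ => False).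

Lemma FA_B (X Y : Bs) : FA F X Y = FBop X Y.
Proof.
rewrite /FA /= isFF (nth_arg_ord _ (Ordinal H0F)) (nth_arg_ord _ (Ordinal HF)) //.
Qed.

Lemma mA_B (t : Bs) : mA F t <-> exists n, t = inr n.
Proof.
rewrite /mA !FA_B; case: t => [a|n] /=; split.
- case; lia.
- by case.
- by exists n.
- move=> _; congr inr; lia.
Qed.

Definition Zs : structure tau := shS F 0%Z (fun a d => (a + d)%Z).

Lemma thetaZ : theta_star (phi F) Zs.
Proof.
exists Bs; split.
- exists inl; split; [by move=> a b []|split].
  + move=> f as_ /=. case: isF.
    * by rewrite !(nth_arg_comp as_ inl).
    * by rewrite !(nth_arg_comp as_ inl).
  + by [].
- apply/models_phi => x z w.
  exists (match x with inl _ => inr 0%N | inr n => inr n end).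
  rewrite /Psem !mA_B !FA_B.
  split; [split|split].
  + by case: x => [a|n]; eexists.
  + case: x => [a|n] //=; congr inl; lia.
  + case=> [[n ->] [m ->]]; split; last by eexists.
    case: x => [a|k] /=; [congr inl | congr inr]; lia.
  + case=> [[n ->] Hx]. case: x Hx => [a|k] Hx; last by exfalso; apply: Hx; eexists.
    move=> /= [E]; lia.
Qed.

Definition Cs (N : positive) : structure tau := shS F (inl 0%Z) (@shC N).

Lemma notthetaC N : (1 < Z.pos N)%Z -> ~ theta_star (phi F) (Cs N).
Proof.
move=> HN [B [[h [hinj [hf _]]] HB]].
have HP := proj1 (models_phi F B) HB.
have hF : forall X Y : Cs N, h (FA F X Y) = FA F (h X) (h Y).
  move=> X Y; rewrite /FA hf; congr finterp; apply: functional_extensionality => i; by case: eqP.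
have FC : forall X Y : Cs N, FA F X Y = shC X 1%Z by move=> X Y; exact: FA_sh.
pose c0 : Cs N := inr (cmk N 0).
pose cn n : Cs N := shC c0 (Z.of_nat n).
have claim : forall n, exists z, mA F z /\ FA F (h c0) z = h (cn n.+1).
  elim=> [|n [z [mz Ez]]].
  - have [u [[mu Eu] _]] := HP (h c0) (h c0) (h c0).
    exists u; split => //; by rewrite Eu -hF FC.
  - have [u [[mu Eu] _]] := HP (h (cn n.+1)) z z.
    have [u2 [Hj1 [Hass Hj2]]] := HP (h c0) z u.
    have [E1 E2] := Hass (conj mz mu).
    exists (FA F z u); split => //.
    rewrite -E1 Ez Eu -hF FC /cn (shA (good_C N)). congr (h (shC c0 _)); lia.
have cN : cn (Pos.to_nat N) = c0.
  rewrite /cn /c0 positive_nat_Z /=; congr inr; apply: cyc_eq => /=.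
  by rewrite Zmod_0_l ?Z.add_0_l Z_mod_same_full.
have [z [mz Ez]] := claim (Pos.to_nat N).-1.
rewrite prednK ?cN in Ez; last by have := Pos2Nat.is_pos N => /ltP.
have [u3 [Hj3 [Hj4 Hn]]] := HP (h c0) z z.
apply: (Hn _ Ez); split => // Hm.
move: Hm; rewrite /mA -!hF => /hinj; rewrite !FC (shA (good_C N)) => E.
have := shP (good_C N) (a := shC c0 1) (d := 1%Z) ltac:(lia).
rewrite (shA (good_C N)); move=> /(_ E); lia.
Qed.
End Fin.

Theorem theorem6 (tau : signature) :
  (exists f g : funs tau, f <> g) ->
  (exists f : funs tau, 2 <= farity f) ->
  exists phi : formula tau,
    Pi02_sentence phi /\
    ~ (exists chi : formula tau, expressible_by (theta_star phi) chi).
Proof.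
move=> _ [F HF]; exists (phi F); split; first exact: Pi02_phi.
move=> [chi [Hs Hchi]].
have b0 : (0 <= bnd F chi)%Z by apply: bnd_ge0.
pose N := Z.to_pos (bnd F chi + 2).
have HN : Z.pos N = (bnd F chi + 2)%Z by rewrite /N Z2Pos.id //; lia.
have MZ : models (Zs F) chi by apply/Hchi; exact: thetaZ.
have MC : models (Cs F N) chi.
  move: MZ; rewrite /models.
  have R : rel (0%Z : Z) (fun a d => (a + d)%Z) (inl 0%Z : (Z + cyc N)%type) (@shC N)
             (bases chi) (bnd F chi) (fun _ => 0%Z) (fun _ => inl 0%Z).
    move=> o1 o2 _ _ d Hd; case: o1 => [?|]; case: o2 => [?|] /=;
      (split; [move=> -> | case] => //).
  rewrite (ef (good_Z (bnd F chi)) (good_C N) (okS_bases (fun y H => H)) _ _ R) //; lia.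
apply: (notthetaC HF (N := N)); first lia.
by apply/Hchi.
Qed.
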